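(* Let $k\ge4$ be even and $\alpha\ge1$ an integer, and let $G=C(\alpha,\alpha+1,\alpha+2,\dots,\alpha+k-1)$. Then $\omega(G)=a(G)$ $(=\alpha+k-1)$.
   Context: $C(\alpha_1,\dots,\alpha_k)$ is defined recursively by $C(\alpha_1)=\overline{K_{\alpha_1}}$ (edgeless graph) and $C(\alpha_1,\dots,\alpha_i)=\overline{C(\alpha_1,\dots,\alpha_{i-1})\cup K_{\alpha_i}}$ for $i=2,\dots,k$ (disjoint union, then complement). Equivalently for $k$ even, with $\pi_i$ the $\alpha_i$ vertices introduced at step $i$: $\pi_i$ is a clique for $i$ odd, independent for $i$ even, and for $i<j$ vertices of $\pi_i,\pi_j$ are adjacent iff $j$ is even. $\omega(G)$ is the clique number; $a(G)$ is the second smallest eigenvalue of the Laplacian $L=D-A$. *)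

(* Defs.v *)
From HB Require Import structures.
From mathcomp Require Import all_boot all_order all_algebra.
Set Implicit Arguments. Unset Strict Implicit. Unset Printing Implicit Defensive.
Import Order.TTheory GRing.Theory Num.Theory.
Local Open Scope ring_scope.

(* A simple graph is a symmetric irreflexive relation e on a finType T. *)

Definition is_clique (T : finType) (e : rel T) (A : {set T}) : bool :=
  [forall x in A, forall y in A, (x != y) ==> e x y].

Definition clique_number (T : finType) (e : rel T) : nat :=
  \max_(A : {set T} | is_clique e A) #|A|.

Definition degree (T : finType) (e : rel T) (x : T) : nat := #|[set y | e x y]|.

Definition laplacian (R : nzRingType) (T : finType) (e : rel T) : 'M[R]_#|T| :=
  \matrix_(i, j) (if i == j then (degree e (enum_val i))%:R
                  else - ((e (enum_val i) (enum_val j))%:R)).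

(* "a is the second smallest eigenvalue (with multiplicity) of the Laplacian":
   the characteristic polynomial factors as prod (X - x) over the nondecreasing
   list s of eigenvalues, and a = s_1 (0-based index 1). Since such a sorted
   factorization is unique, this determines a. *)
Definition is_alg_connectivity (R : rcfType) (T : finType) (e : rel T) (a : R) : Prop :=
  exists s : seq R,
    [/\ sorted <=%R s,
        char_poly (laplacian R e) = \prod_(x <- s) ('X - x%:P) &
        s`_1 = a].

(* The graph C(alpha_1, ..., alpha_k), for k even, via the explicit description:
   vertex (i, j) is the j-th vertex introduced at step i (0-based, so the paper's
   step i+1).  pi_(paper i) is a clique for paper-i odd (our i even), independent
   for paper-i even (our i odd); for steps i < j, all vertices of the two steps
   are adjacent iff paper-j is even (our j odd). *)
Definition CV (k : nat) (alpha : 'I_k -> nat) : finType :=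
  {i : 'I_k & 'I_(alpha i)}.

Definition Cadj (k : nat) (alpha : 'I_k -> nat) : rel (CV alpha) :=
  fun u v =>
    (u != v) &&
    (if tag u == tag v then ~~ odd (tag u)
     else odd (maxn (tag u) (tag v))).
Arguments Cadj {k} alpha.
Arguments CV {k} alpha.

(* Main.v *)
Require Import Defs.
From HB Require Import structures.
From mathcomp Require Import all_boot all_order all_algebra ring lra zify.
Import Order.TTheory GRing.Theory Num.Theory.
Section Clique.
Variables (k a : nat) (alpha : 'I_k -> nat).
Hypotheses (hal : forall i, alpha i = (a + i)%N) (hk : (4 <= k)%N) (ek : ~~ odd k) (ha : (1 <= a)%N).

Definition Bb' (s t : 'I_k) : bool := if s == t then ~~ odd s else odd (maxn s t).

Lemma CV_eq' (u u' : CV alpha) : tag u = tag u' -> (tagged u : nat) = tagged u' -> u = u'.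
Proof. by case: u => i j; case: u' => i' j' /= e; subst i' => /val_inj ->. Qed.

Definition fv (x : CV alpha) : nat :=
  if odd (tag x) then (a + tag x - 1)%N else tagged x.

Lemma fv_le (x : CV alpha) : (fv x <= a + k - 2)%N.
Proof.
rewrite /fv; case: x => t j /=; have tk := ltn_ord t; have jt : (j < a + t)%N by rewrite -hal.
case: ifP => ot; first lia.
have : (t.+1 != k) by apply/eqP => e; move: ek; rewrite -e /= ot.
move=> /eqP; lia.
Qed.

Lemma fv_inj (x y : CV alpha) : x != y -> Cadj alpha x y -> fv x = fv y -> x = y.
Proof.
move=> ne; rewrite /Cadj ne /= /fv.
case: x ne => tx jx; case: y => ty jy /= ne.
have jxt : (jx < a + tx)%N by rewrite -hal.
have jyt : (jy < a + ty)%N by rewrite -hal.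
case: (eqVneq tx ty) => [e|nt].
  subst ty; case: ifP => // ot _ ej; exact: CV_eq'.
case: (ltngtP tx ty) => [lt|lt|/val_inj e]; last by rewrite e eqxx in nt.
- move=> oy; rewrite oy.
  case: ifP => ox e; last lia.
  exfalso; suff : tx = ty :> nat by move/val_inj => e'; rewrite e' eqxx in nt.
  lia.
- move=> ox; rewrite ox.
  case: ifP => oy e; last lia.
  exfalso; suff : tx = ty :> nat by move/val_inj => e'; rewrite e' eqxx in nt.
  lia.
Qed.

Lemma clique_ub (A : {set CV alpha}) : is_clique (Cadj alpha) A -> (#|A| <= a + k - 1)%N.
Proof.
move=> cl.
pose f (x : CV alpha) : 'I_(a + k - 2).+1 := inord (fv x).
have inj : {in A &, injective f}.
  move=> x y xA yA; rewrite /f => /(congr1 (@nat_of_ord _)); rewrite !inordK ?ltnS ?fv_le // => e.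
  case: (eqVneq x y) => // ne; apply: fv_inj => //.
  by move/forallP: cl => /(_ x); rewrite xA /= => /forallP /(_ y); rewrite yA ne.
rewrite -(card_in_imset inj); apply: leq_trans (max_card _) _; rewrite card_ord; lia.
Qed.

Variables (km1 km2 : 'I_k).
Hypotheses (e1 : val km1 = k.-1) (e2 : val km2 = k.-2).

Lemma pos1 : (0 < alpha km1)%N.
Proof. by rewrite hal; lia. Qed.

Definition ulast : CV alpha := Tagged (fun i => 'I_(alpha i)) (Ordinal pos1).
Definition blk : {set CV alpha} := [set Tagged (fun i => 'I_(alpha i)) j | j : 'I_(alpha km2)].
Definition A0 := ulast |: blk.

Lemma A0_tag (x : CV alpha) : x \in A0 -> (x = ulast) \/ (tag x = km2).
Proof.
rewrite !inE => /orP [/eqP -> | /imsetP [j _ ->]]; [by left | by right].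
Qed.

Lemma A0_clique : is_clique (Cadj alpha) A0.
Proof.
have [kk ekk] : exists kk, k = kk.+2 by exists k.-2; lia.
have ekk' := ek; rewrite ekk /= negbK in ekk'.
have ok1 : odd km1 by rewrite e1 ekk /=.
have ok2 : ~~ odd km2 by rewrite e2 ekk /=.
have n12 : (km2 < km1)%N by rewrite e1 e2; lia.
apply/forallP => x; apply/implyP => /A0_tag hx; apply/forallP => y; apply/implyP => /A0_tag hy.
apply/implyP => ne; rewrite /Cadj ne /=.
case: hx => [ex|tx]; case: hy => [ey|ty].
- by rewrite ex ey eqxx in ne.
- rewrite ex ty /= -val_eqE (gtn_eqF n12) (maxn_idPl (ltnW n12)) //.
- rewrite ey tx /= -val_eqE (ltn_eqF n12) (maxn_idPr (ltnW n12)) //.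
- by rewrite tx ty eqxx.
Qed.

Lemma A0_card : #|A0| = (a + k - 1)%N.
Proof.
rewrite cardsU1 card_in_imset; last first.
  by move=> j j' _ _ /(congr1 (fun x : CV alpha => val (tagged x))) /val_inj.
have -> : ulast \notin blk.
  apply/imsetP => -[j _] /(congr1 (fun x : CV alpha => val (tag x))) /=; rewrite e1 e2; lia.
by rewrite card_ord hal e2 /=; lia.
Qed.

Lemma clique_num : clique_number (Cadj alpha) = (a + k - 1)%N.
Proof.
apply/eqP; rewrite eqn_leq; apply/andP; split.
  by apply/bigmax_leqP => A; apply: clique_ub.
by rewrite -A0_card; apply: (leq_bigmax_cond A0); exact: A0_clique.
Qed.

End Clique.

Local Open Scope ring_scope.
Lemma char_poly_sim (R : fieldType) n (L P : 'M[R]_n) (d : 'I_n -> R) :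
  P \in unitmx -> L *m P = P *m diag_mx (\row_i d i) ->
  char_poly L = \prod_i ('X - (d i)%:P).
Proof.
move=> Pu LP.
have -> : \prod_i ('X - (d i)%:P) = char_poly (diag_mx (\row_i d i)).
  rewrite char_poly_trig; last exact: diag_mx_is_trig.
  by apply: eq_bigr => i _; rewrite !mxE eqxx mulr1n.
set D := diag_mx _.
have E : char_poly_mx L *m map_mx polyC P = map_mx polyC P *m char_poly_mx D.
  rewrite /char_poly_mx mulmxBl mulmxBr -!map_mxM LP; congr (_ - _).
  by rewrite -scalar_mxC.
have := congr1 determinant E; rewrite !det_mulmx det_map_mx.
rewrite mulrC => /mulfI; apply.
by rewrite polyC_eq0 -unitfE -unitmxE.
Qed.

Lemma unit_of_orth (R : fieldType) n (P : 'M[R]_n) (c : 'I_n -> R) :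
  (forall i, c i != 0) -> P^T *m P = diag_mx (\row_i c i) -> P \in unitmx.
Proof.
move=> cnz E; rewrite unitmxE unitfE.
have := congr1 determinant E; rewrite det_mulmx det_tr det_diag.
move=> H; apply/eqP => P0; move: H; rewrite P0 mul0r => /esym/eqP.
move/prodf_eq0 => [i _]; rewrite mxE (negbTE (cnz i)).
by [].
Qed.

Lemma sorted_second (R : realDomainType) (s d : seq R) (z m : R) :
  sorted <=%R s -> perm_eq s (z :: d) -> z < m -> all (fun x => m <= x) d -> m \in d ->
  s`_1 = m.
Proof.
move=> so pe zm ad md.
have cnt : count (fun x => x < m) s = 1%N.
  rewrite (permP pe) /= zm add1n; congr _.+1; apply/eqP; rewrite -leqn0 leqNgt -has_count.
  by apply/hasPn => x /(allP ad); rewrite leNgt.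
have ms : m \in s by rewrite (perm_mem pe) inE md orbT.
case: s so cnt ms {pe} => [//|x s] /= so.
have xs := order_path_min (@le_trans _ _) so.
case: (ltP x m) => [xm|mx].
  rewrite add1n => -[/eqP]; rewrite -leqn0 leqNgt -has_count => /hasPn ns.
  rewrite inE => /orP [/eqP e|ms]; first by rewrite e ltxx in xm.
  case: s so xs ns ms => [//|y s] /= so /andP [_ ys] ns.
  have my : m <= y by rewrite leNgt; apply: ns; rewrite inE eqxx.
  rewrite inE => /orP [/eqP -> //|ms].
  apply/eqP; rewrite eq_le my andbT.
  by move: so => /andP [_ so]; have := order_path_min (@le_trans _ _) so => /allP /(_ m ms).
move=> c; exfalso; move: c; rewrite add0n => c.
have : has (fun y => y < m) s by rewrite has_count c.
move/hasP => -[y ys ym]; have /allP/(_ y ys) := xs.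
by move=> xy; have := le_lt_trans (le_trans mx xy) ym; rewrite ltxx.
Qed.

Section Graph.
Variables (R : rcfType) (k : nat) (alpha : 'I_k -> nat).
Local Notation T := (CV alpha).

Definition Bb (s t : 'I_k) : bool := if s == t then ~~ odd s else odd (maxn s t).

Lemma CadjE (u v : T) : Cadj alpha u v = (u != v) && Bb (tag u) (tag v).
Proof. by []. Qed.

Definition Lent (x y : T) : R :=
  if x == y then (degree (Cadj alpha) x)%:R else - ((Cadj alpha x y)%:R).

Lemma Lent_act (f : T -> R) (x : T) :
  \sum_y Lent x y * f y = \sum_y (Bb (tag x) (tag y))%:R * (f x - f y).
Proof.
have deg : (degree (Cadj alpha) x)%:R = \sum_y ((Cadj alpha x y)%:R : R).
  rewrite /degree -sum1_card natr_sum big_mkcond /=.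
  by apply: eq_bigr => y _; rewrite inE; case: (Cadj _ x y).
rewrite (bigD1 x) //= /Lent eqxx deg.
transitivity (\sum_y ((Cadj alpha x y)%:R : R) * (f x - f y)).
  under [RHS]eq_bigr do rewrite mulrBr.
  rewrite sumrB -mulr_suml; congr (_ + _).
  rewrite [in RHS](bigD1 x) //= {1}CadjE eqxx /= mul0r add0r -sumrN.
  by apply: eq_bigr => y nyx; rewrite eq_sym (negbTE nyx) mulNr.
apply: eq_bigr => y _; rewrite CadjE; case: eqP => [->|]; first by rewrite subrr !mulr0.
by [].
Qed.

Lemma sum_blocks (F : T -> R) :
  \sum_(y : T) F y = \sum_(t : 'I_k) \sum_(j : 'I_(alpha t)) F (Tagged (fun i : 'I_k => 'I_(alpha i)) j).
Proof.
rewrite (sig_big_dep xpredT (fun i => xpredT) (fun i j => F (Tagged (fun i : 'I_k => 'I_(alpha i)) j))) /=.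
by apply: eq_bigr => -[i j].
Qed.


Lemma split_at (G : 'I_k -> R) (i : 'I_k) :
  \sum_t G t = \sum_(t : 'I_k | (t < i)%N) G t + G i + \sum_(t : 'I_k | (i < t)%N) G t.
Proof.
rewrite (bigD1 i) //= (bigID (fun t : 'I_k => (t < i)%N)) /= addrCA addrA; congr (_ + _ + _).
apply: eq_bigl => t; rewrite -val_eqE /=; case: (ltngtP t i) => //=.
apply: eq_bigl => t; rewrite -val_eqE /=; case: (ltngtP t i) => //=.
Qed.

Lemma Bb_lt (s t : 'I_k) : (s < t)%N -> Bb s t = odd t.
Proof. by move=> h; rewrite /Bb -val_eqE (ltn_eqF h) (maxn_idPr (ltnW h)). Qed.
Lemma Bb_gt (s t : 'I_k) : (t < s)%N -> Bb s t = odd s.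
Proof. by move=> h; rewrite /Bb -val_eqE (gtn_eqF h) (maxn_idPl (ltnW h)). Qed.

Definition nn (i : 'I_k) : nat := \sum_(t < k | (t < i)%N) alpha t.
Definition W (i t : 'I_k) : R :=
  if (t < i)%N then (alpha i)%:R else if t == i then - (nn i)%:R else 0.
Definition lamW (i : 'I_k) : R :=
  (odd i)%:R * (alpha i + nn i)%:R + \sum_(t : 'I_k | (i < t)%N) (odd t)%:R * (alpha t)%:R.

Lemma nnE (i : 'I_k) : (nn i)%:R = \sum_(t : 'I_k | (t < i)%N) (alpha t)%:R :> R.
Proof. by rewrite /nn natr_sum. Qed.

Lemma W_eig (i s : 'I_k) :
  \sum_t (Bb s t)%:R * (alpha t)%:R * (W i s - W i t) = lamW i * W i s.
Proof.
rewrite (split_at _ i) /lamW.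
have Wlt (t : 'I_k) : (t < i)%N -> W i t = (alpha i)%:R by rewrite /W => ->.
have Wgt (t : 'I_k) : (i < t)%N -> W i t = 0.
  by move=> h; rewrite /W ltnNge (ltnW h) /= -val_eqE (gtn_eqF h).
have Wi : W i i = - (nn i)%:R by rewrite /W ltnn eqxx.
case: (ltngtP s i) => [slt|sgt|/val_inj ->].
- rewrite (Wlt s) // Wi opprK.
  under eq_bigr => t ht do rewrite Wlt // subrr mulr0.
  rewrite big1_eq add0r Bb_lt // mulrDl; congr (_ + _); first by rewrite natrD; ring.
  rewrite mulr_suml; apply: eq_bigr => t ht.
  by rewrite Wgt // subr0 Bb_lt ?(ltn_trans slt) //; ring.
- rewrite (Wgt s) // Wi sub0r opprK mulr0.
  under [X in _ + X = _]eq_bigr => t ht do rewrite Wgt // subrr mulr0.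
  rewrite big1_eq addr0.
  under eq_bigr => t ht do rewrite Wlt // Bb_gt ?(ltn_trans ht) //.
  rewrite Bb_gt // nnE mulr_sumr -big_split /=; apply: big1 => t _; ring.
- rewrite Wi subrr mulr0 addr0.
  under eq_bigr => t ht do rewrite Wlt // Bb_gt //.
  under [X in _ + X = _]eq_bigr => t ht do rewrite Wgt // Bb_lt //.
  rewrite mulrDl; congr (_ + _); last first.
    by rewrite mulr_suml; apply: eq_bigr => t _; rewrite subr0.
  under eq_bigr do rewrite (mulrC (odd i)%:R) -mulrA.
  by rewrite -mulr_suml -nnE natrD; ring.
Qed.

Lemma helm_sum (n j0 : nat) : (j0 < n)%N ->
  \sum_(j < n) (((j < j0)%N)%:R - ((j == j0 :> nat)%N)%:R * j0%:R) = 0 :> R.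
Proof.
move=> h; rewrite sumrB; apply/eqP; rewrite subr_eq0; apply/eqP.
rewrite -(big_mkord xpredT (fun j => (((j < j0)%N)%:R : R))).
rewrite (big_cat_nat (n := j0) (leq0n j0) (ltnW h)) /=.
rewrite (eq_big_nat _ _ (F2 := fun _ => 1)); last by move=> j /andP [_ ->].
rewrite [X in _ + X](eq_big_nat _ _ (F2 := fun _ => 0)); last first.
  by move=> j /andP [hj _]; rewrite ltnNge hj.
rewrite sumr_const_nat big1_eq addr0 subn0.
rewrite (bigD1 (Ordinal h)) //= eqxx mul1r big1 ?addr0 //.
by move=> j hj; rewrite -val_eqE /= in hj; rewrite (negbTE hj) mul0r.
Qed.

Definition Hv (i : 'I_k) (j0 : nat) (t : 'I_k) (j : nat) : R :=
  if t == i then ((j < j0)%N)%:R - ((j == j0 :> nat)%N)%:R * j0%:R else 0.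
Definition vecF (i : 'I_k) (j0 : nat) (t : 'I_k) (j : nat) : R :=
  if j0 == 0%N then (if i == 0%N :> nat then 1 else W i t) else Hv i j0 t j.
Definition vec (u x : CV alpha) : R := vecF (tag u) (tagged u) (tag x) (tagged x).
Definition Delta (s : 'I_k) : R := \sum_t (Bb s t)%:R * (alpha t)%:R.
Definition lam (u : CV alpha) : R :=
  if tagged u == 0%N :> nat then (if tag u == 0%N :> nat then 0 else lamW (tag u))
  else Delta (tag u).

Lemma act_blocks (F : 'I_k -> nat -> R) (x : CV alpha) :
  \sum_(y : CV alpha) (Bb (tag x) (tag y))%:R * (F (tag x) (tagged x) - F (tag y) (tagged y))
  = \sum_t (Bb (tag x) t)%:R * ((alpha t)%:R * F (tag x) (tagged x)
                                  - \sum_(j < alpha t) F t j).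
Proof.
rewrite sum_blocks; apply: eq_bigr => t _.
transitivity (\sum_(j < alpha t) (Bb (tag x) t)%:R * (F (tag x) (tagged x) - F t j)).
  by apply: eq_bigr.
by rewrite -mulr_sumr sumrB sumr_const card_ord !mulr_natl.
Qed.

Lemma vec_eig (u x : CV alpha) :
  \sum_y Lent x y * vec u y = lam u * vec u x.
Proof.
rewrite Lent_act /vec (act_blocks (vecF (tag u) (tagged u))) /lam.
case: u => i j0 /=; case: x => s js /=.
rewrite /vecF; case: eqP => [j00|j0n0].
  case: eqP => [i0|in0].
    rewrite mul0r; apply: big1 => t _.
    by rewrite sumr_const card_ord mulr1 subrr mulr0.
  rewrite -W_eig; apply: eq_bigr => t _.
  by rewrite sumr_const card_ord -[W i t *+ _]mulr_natl mulrBr mulrBr !mulrA.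
have hs : forall t, \sum_(j < alpha t) Hv i j0 t j = 0.
  move=> t; rewrite /Hv; case: eqP => [->|_]; last by rewrite big1_eq.
  exact: helm_sum.
under eq_bigr do rewrite hs subr0 mulrA.
rewrite -mulr_suml -/(Delta s) /Hv; case: eqP => [e|_]; last by rewrite !mulr0.
by have -> : Delta s = Delta i by rewrite e.
Qed.

Lemma orth_gen (f g : CV alpha -> R) c :
  \sum_x f x = 0 -> (forall x, f x != 0 -> g x = c) -> \sum_x f x * g x = 0.
Proof.
move=> s0 h; transitivity (\sum_x f x * c).
  apply: eq_bigr => x _; have [->|nz] := eqVneq (f x) 0; first by rewrite !mul0r.
  by rewrite h.
by rewrite -mulr_suml s0 mul0r.
Qed.

Hypothesis alpha_pos : forall t, (0 < alpha t)%N.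

Lemma sumW (i : 'I_k) : \sum_t (alpha t)%:R * W i t = 0.
Proof.
rewrite (split_at _ i) /W ltnn eqxx.
under eq_bigr => t ht do rewrite ht.
under [X in _ + X]eq_bigr => t ht do rewrite ltnNge (ltnW ht) /= -val_eqE (gtn_eqF ht) mulr0.
by rewrite big1_eq addr0 -mulr_suml -nnE mulrN mulrC subrr.
Qed.

Lemma sum_vec (u : CV alpha) : ~~ ((tag u == 0 :> nat) && (tagged u == 0 :> nat)) ->
  \sum_x vec u x = 0.
Proof.
case: u => i j0 /= h; rewrite sum_blocks /vec /= /vecF.
case: eqP => [j00|j0n0].
  move: h; rewrite j00 eqxx andbT => /negbTE ->.
  rewrite -[RHS](sumW i); apply: eq_bigr => t _.
  by rewrite sumr_const card_ord mulr_natl.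
apply: big1 => t _; rewrite /Hv; case: eqP => [->|_]; last by rewrite big1_eq.
exact: helm_sum.
Qed.

Lemma W_nz (i t : 'I_k) : W i t != 0 -> (t <= i)%N.
Proof.
rewrite /W; case: ltnP => [/ltnW //|hit]; case: (eqVneq t i) => [-> _ //|_].
by rewrite eqxx.
Qed.

Lemma Hv_nz (i t : 'I_k) j0 j : Hv i j0 t j != 0 -> t = i /\ (j <= j0)%N.
Proof.
rewrite /Hv; case: (eqVneq t i) => [-> | _]; last by rewrite eqxx.
move=> h; split => //; move: h; case: (ltnP j j0) => [/ltnW //|hj].
by case: (eqVneq j j0) => [-> //|hne]; rewrite mul0r subrr eqxx.
Qed.

Lemma CV_eq (u u' : CV alpha) : tag u = tag u' -> (tagged u : nat) = tagged u' -> u = u'.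
Proof. by case: u => i j; case: u' => i' j' /= e; subst i' => /val_inj ->. Qed.

Definition ltv (u u' : CV alpha) : bool :=
  if tagged u != 0%N :> nat then
    (if tagged u' != 0%N :> nat then (tag u != tag u') || (tagged u < tagged u')%N else true)
  else [&& tag u != 0%N :> nat, tagged u' == 0%N :> nat &
           ((tag u < tag u')%N || (tag u' == 0%N :> nat))].

Lemma ltv_total (u u' : CV alpha) : u != u' -> ltv u u' || ltv u' u.
Proof.
move=> neq; rewrite /ltv.
case: (eqVneq (tagged u : nat) 0%N) => [h0|h0]; case: (eqVneq (tagged u' : nat) 0%N) => [h0'|h0'] /=.
- case: (eqVneq (tag u : nat) 0%N) => [t0|t0]; case: (eqVneq (tag u' : nat) 0%N) => [t0'|t0'] /=;
    rewrite ?orbT //.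
    by move: neq; rewrite (CV_eq _ _ (val_inj (etrans t0 (esym t0'))) (etrans h0 (esym h0'))) eqxx.
  case: (ltngtP (tag u) (tag u')) => //= e.
  by move: neq; rewrite (CV_eq _ _ (val_inj e) (etrans h0 (esym h0'))) eqxx.
- by rewrite orbT.
- by [].
- case: (eqVneq (tag u) (tag u')) => [e|]; last by [].
  rewrite /=.
  case: (ltngtP (tagged u) (tagged u')) => //= e'; rewrite ?orbT //.
  by move: neq; rewrite (CV_eq _ _ e e') eqxx.
Qed.

Lemma ltv_dom (u u' : CV alpha) : ltv u u' ->
  exists c, forall x, vec u x != 0 -> vec u' x = c.
Proof.
case: u => i j0; case: u' => i' j0'; rewrite /ltv /vec /vecF /=.
case: (eqVneq (j0 : nat) 0%N) => [h0|h0]; case: (eqVneq (j0' : nat) 0%N) => [h0'|h0'] /=.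
- case: (eqVneq (i : nat) 0%N) => [//|ti] /= /orP [lt|ti'].
  + exists (alpha i')%:R => -[t j] /= /W_nz h.
    case: (eqVneq (i' : nat) 0%N) => [ti'|_]; first by rewrite ti' in lt.
    by rewrite /W (leq_ltn_trans h lt).
  + by exists 1 => -[t j] /=; rewrite ti'.
- by rewrite andbF.
- move=> _; case: (eqVneq (i' : nat) 0%N) => [ti'|ti'].
    by exists 1 => -[t j] /=.
  exists (W i' i) => -[t j] /= /Hv_nz [e _]; by rewrite e.
- case: (eqVneq i i') => [ei|ne] /=; last first.
    move=> _; exists 0 => -[t j] /= /Hv_nz [e _].
    by rewrite /Hv; have -> : (t == i') = false by rewrite e (negbTE ne).
  move=> lt; exists 1 => -[t j] /= /Hv_nz [e le].
  rewrite /Hv; have -> : (t == i') = true by rewrite e ei eqxx.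
  by rewrite (leq_ltn_trans le lt) (ltn_eqF (leq_ltn_trans le lt)) mul0r subr0.
Qed.

Lemma ltv_sum0 (u u' : CV alpha) : ltv u u' -> \sum_x vec u x = 0.
Proof.
rewrite /ltv => h; apply: sum_vec; apply/negP => /andP [/eqP t0 /eqP h0].
by move: h; rewrite h0 t0.
Qed.

Lemma vec_orth (u u' : CV alpha) : u != u' -> \sum_x vec u x * vec u' x = 0.
Proof.
move/ltv_total/orP => [l|l].
  have [c hc] := ltv_dom _ _ l; exact: orth_gen (ltv_sum0 _ _ l) hc.
under eq_bigr do rewrite mulrC.
have [c hc] := ltv_dom _ _ l; exact: orth_gen (ltv_sum0 _ _ l) hc.
Qed.

Lemma vec_self (u : CV alpha) : vec u u != 0.
Proof.
case: u => i j0; rewrite /vec /vecF /=.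
case: (eqVneq (j0 : nat) 0%N) => [h0|h0].
  case: (eqVneq (i : nat) 0%N) => [_|ti]; first exact: oner_neq0.
  rewrite /W ltnn eqxx oppr_eq0 pnatr_eq0 -lt0n.
  have k0 : (0 < k)%N by apply: leq_ltn_trans (ltn_ord i).
  rewrite /nn (bigD1 (Ordinal k0)) /=; last by rewrite lt0n.
  by rewrite addn_gt0 alpha_pos.
rewrite /Hv eqxx ltnn eqxx mul1r sub0r oppr_eq0 pnatr_eq0 //.
Qed.

Lemma vec_norm (u : CV alpha) : \sum_x vec u x * vec u x != 0.
Proof.
apply/negP => /eqP /psumr_eq0P h.
have /eqP := h (fun x _ => ltac:(rewrite -expr2; exact: sqr_ge0)) u isT.
by rewrite mulf_eq0 orbb (negbTE (vec_self u)).
Qed.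

Lemma sum_ge1 (I : finType) (P : pred I) (F : I -> R) i0 :
  P i0 -> (forall i, P i -> 0 <= F i) -> F i0 <= \sum_(i | P i) F i.
Proof.
move=> Pi0 h; rewrite (bigD1 i0) //= lerDl; apply: sumr_ge0 => i /andP [Pi _]; exact: h.
Qed.

Lemma sum_ge2 (I : finType) (P : pred I) (F : I -> R) i0 i1 :
  i0 != i1 -> P i0 -> P i1 -> (forall i, P i -> 0 <= F i) -> F i0 + F i1 <= \sum_(i | P i) F i.
Proof.
move=> ne Pi0 Pi1 h; rewrite (bigD1 i0) //= lerD2l.
apply: (sum_ge1 _ (fun i => P i && (i != i0))); first by rewrite Pi1 eq_sym.
by move=> i /andP [Pi _]; exact: h.
Qed.

Lemma bm_ge0 (b : bool) (n : nat) : 0 <= (b%:R * n%:R : R).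
Proof. by rewrite mulr_ge0 ?ler0n. Qed.

Lemma Bb_ii (i : 'I_k) : Bb i i = ~~ odd i.
Proof. by rewrite /Bb eqxx. Qed.

Section Spec.
Variables (km1 km2 o0 : 'I_k).
Hypotheses (hk : (4 <= k)%N) (ek : ~~ odd k).
Hypotheses (e1 : val km1 = k.-1) (e2 : val km2 = k.-2) (e0 : val o0 = 0%N).
Hypothesis hlast : (alpha km1 <= alpha o0 + alpha km2)%N.

Lemma odd_km1 : odd km1.
Proof. rewrite e1; case: k hk ek => [|[|kk]] //= _; by rewrite negbK. Qed.
Lemma odd_km2 : ~~ odd km2.
Proof. rewrite e2; case: k hk ek => [|[|kk]] //= _; by rewrite !negbK. Qed.

Lemma le_km1 (i : 'I_k) : (i <= km1)%N.
Proof. by rewrite e1 -ltnS prednK ?ltn_ord // (leq_ltn_trans _ (ltn_ord i)). Qed.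

Definition u0 : CV alpha := Tagged (fun i => 'I_(alpha i)) (Ordinal (alpha_pos o0)).
Definition u2 : CV alpha := Tagged (fun i => 'I_(alpha i)) (Ordinal (alpha_pos km2)).

Lemma lam_u0 : lam u0 = 0.
Proof. by rewrite /lam /= e0. Qed.

Lemma lam_u2 : lam u2 = (alpha km1)%:R.
Proof.
rewrite /lam /= e2; have -> : (k.-2 == 0)%N = false by case: k hk => [|[|[|kk]]].
rewrite /lamW (negbTE odd_km2) mul0r add0r.
rewrite (bigD1 km1) /=; last by rewrite e1 e2; case: k hk => [|[|[|kk]]].
rewrite odd_km1 mul1r big1 ?addr0 // => t /andP [lt ne].
exfalso; move: lt ne (ltn_ord t); rewrite -val_eqE /= e1 e2 => h1 h2 h3.
move/eqP: h2; lia.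
Qed.

Lemma lam_ge (x : CV alpha) : x != u0 -> (alpha km1)%:R <= lam x.
Proof.
have km20 : o0 != km2 by rewrite -val_eqE /= e0 e2; case: k hk => [|[|[|kk]]].
have lt01 : (o0 < km1)%N by rewrite e0 e1; case: k hk => [|[|kk]].
have lt21 : (km2 < km1)%N by rewrite e2 e1; case: k hk => [|[|[|kk]]].
case: x => i j0 /= ne; rewrite /lam /=.
case: (eqVneq (j0 : nat) 0%N) => [h0|h0].
  case: (eqVneq (i : nat) 0%N) => [i0|i0].
    exfalso; move/eqP: ne; apply; apply: CV_eq => /=; first by apply: val_inj; rewrite /= e0.
    by rewrite h0.
  rewrite /lamW; have := le_km1 i; rewrite leq_eqVlt => /orP [/eqP ei|lt].
    have -> : i = km1 by apply: val_inj.
    rewrite odd_km1 mul1r -[X in X <= _]addr0 natrD -addrA lerD2l.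
    by rewrite addr_ge0 ?ler0n // sumr_ge0 // => t _; apply: bm_ge0.
  rewrite -[X in X <= _]add0r; apply: lerD; first exact: bm_ge0.
  have := sum_ge1 _ (fun t : 'I_k => (i < t)%N) (fun t : 'I_k => (odd t)%:R * (alpha t)%:R) km1 lt (fun t _ => bm_ge0 _ _).
  by rewrite odd_km1 mul1r.
rewrite /Delta; have := le_km1 i; rewrite leq_eqVlt => /orP [/eqP ei|lt].
  have -> : i = km1 by apply: val_inj.
  apply: le_trans (sum_ge2 _ xpredT (fun t => (Bb km1 t)%:R * (alpha t)%:R) _ _ km20 _ _ _) => //;
    last by move=> t _; apply: bm_ge0.
  by rewrite !Bb_gt // odd_km1 !mul1r -natrD ler_nat.
apply: le_trans (sum_ge1 _ xpredT (fun t => (Bb i t)%:R * (alpha t)%:R) km1 _ _) => //;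
  last by move=> t _; apply: bm_ge0.
by rewrite Bb_lt // odd_km1 mul1r.
Qed.


Lemma alg_conn : is_alg_connectivity (Cadj alpha) ((alpha km1)%:R : R).
Proof.
pose P : 'M[R]_#|CV alpha| := \matrix_(p, q) vec (enum_val q) (enum_val p).
have LP : laplacian R (Cadj alpha) *m P = P *m diag_mx (\row_q lam (enum_val q)).
  apply/matrixP => p q; rewrite mul_mx_diag !mxE.
  under eq_bigr do rewrite !mxE.
  rewrite mulrC -(vec_eig (enum_val q) (enum_val p)) (big_enum_val (A := CV alpha)).
  by apply: eq_bigr => r _; rewrite /Lent (inj_eq enum_val_inj).
have PP : P^T *m P = diag_mx (\row_q (\sum_x vec (enum_val q) x * vec (enum_val q) x)).
  apply/matrixP => p q; rewrite !mxE.
  under eq_bigr do rewrite !mxE.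
  case: (eqVneq p q) => [->|ne]; first by rewrite mulr1n (big_enum_val (A := CV alpha)).
  rewrite mulr0n -(big_enum_val (A := CV alpha) (fun x => vec (enum_val p) x * vec (enum_val q) x)).
  by rewrite vec_orth // (inj_eq enum_val_inj).
have Pu := unit_of_orth _ _ _ _ (fun q => vec_norm (enum_val q)) PP.
have cp := char_poly_sim _ _ _ _ _ Pu LP.
exists (sort <=%R (map lam (enum (CV alpha)))).
split.
- by apply: sort_sorted => x y; exact: le_total.
- have pe : perm_eq (sort <=%R (map lam (enum (CV alpha)))) (map lam (enum (CV alpha))).
    by rewrite perm_sort.
  rewrite cp (perm_big _ pe) big_map -(big_enum_val (A := CV alpha) (fun x => 'X - (lam x)%:P)).
  by rewrite big_enum.
- have mem0 := mem_enum (CV alpha) u0.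
  apply: (sorted_second _ _ (map lam (rem u0 (enum (CV alpha)))) 0).
  + by apply: sort_sorted => x y; exact: le_total.
  + rewrite perm_sort -lam_u0 -map_cons; apply: perm_map; exact: perm_to_rem.
  + by rewrite ltr0n alpha_pos.
  + apply/allP => y /mapP [x]; rewrite (mem_rem_uniq _ (enum_uniq _)) => /andP [ne _] ->.
    exact: lam_ge.
  + rewrite -lam_u2; apply: map_f; rewrite (mem_rem_uniq _ (enum_uniq _)) inE mem_enum andbT.
    apply/eqP => e; have := congr1 (fun x : CV alpha => val (tag x)) e; rewrite /= e0 e2; lia.
Qed.
End Spec.

End Graph.

Theorem corollary5p6 (R : rcfType) (k a : nat) :
  (4 <= k)%N -> ~~ odd k -> (1 <= a)%N ->
  let alpha := fun i : 'I_k => (a + i)%N in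
  is_alg_connectivity (Cadj alpha) ((clique_number (Cadj alpha))%:R : R) /\
  clique_number (Cadj alpha) = (a + k - 1)%N.
Proof.
move=> hk ek ha alpha.
have hal : forall i, alpha i = (a + i)%N by [].
have apos : forall t, (0 < alpha t)%N by move=> t; rewrite hal; lia.
have k1 : (k.-1 < k)%N by lia.
have k2 : (k.-2 < k)%N by lia.
have k0 : (0 < k)%N by lia.
pose km1 : 'I_k := Ordinal k1.
pose km2 : 'I_k := Ordinal k2.
pose o0 : 'I_k := Ordinal k0.
have cn := clique_num _ _ _ hal hk ek ha km1 km2 (erefl : val km1 = k.-1) (erefl : val km2 = k.-2).
split; last exact: cn.
rewrite cn.
have -> : (a + k - 1)%N = alpha km1 by rewrite hal /=; lia.
apply: (alg_conn R _ _ apos km1 km2 o0 hk ek (erefl : val km1 = k.-1) (erefl : val km2 = k.-2) (erefl : val o0 = 0%N)).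
rewrite !hal /=; lia.
Qed.
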